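(* Let $\mathcal{G}(t)$ be a matrix-weighted switching network satisfying Assumption 1 (described in the context), with matrix-valued Laplacian $L^k$ on $[t_k,t_{k+1})$ and $\Delta t_k=t_{k+1}-t_k$. For integers $0\le k'<k''$, let $$\Phi(t_{k''},t_{k'})=e^{-L^{k''-1}\Delta t_{k''-1}}\cdots e^{-L^{k'}\Delta t_{k'}},$$ and let $\widetilde{L}_{[t_{k'},t_{k''})}=\frac{1}{t_{k''}-t_{k'}}\int_{t_{k'}}^{t_{k''}}L(t)dt$. Let $m=\dim\mathrm{null}(\widetilde{L}_{[t_{k'},t_{k''})})$ with $m<dn$, and let $\mu_1\ge\mu_2\ge\cdots\ge\mu_{dn}$ be the eigenvalues of $\Phi(t_{k''},t_{k'})^\top\Phi(t_{k''},t_{k'})$ in nonincreasing order (so that $\mu_1=\dots=\mu_m=1$). Then $$\mu_{m+1}\big(\Phi(t_{k''},t_{k'})^\top\Phi(t_{k''},t_{k'})\big)<1.$$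
   Context: A matrix-weighted switching network $\mathcal{G}(t)=(\mathcal{V},\mathcal{E}(t),A(t))$ has node set $\mathcal{V}=\{1,\dots,n\}$, $n>1$; each edge $(i,j)\in\mathcal{E}(t)$ carries a symmetric weight $A_{ij}(t)\in\mathbb{R}^{d\times d}$ which is either positive (semi-)definite or negative (semi-)definite, with $A_{ij}=A_{ji}$, $A_{ii}=0$, $A_{ij}(t)=0$ if $(i,j)\notin\mathcal{E}(t)$; standing assumption: for each pair $(i,j)$ the weight $A_{ij}(t)$ has the same sign type for all $t$. Set $|A_{ij}|=A_{ij}$ if $A_{ij}\succeq0$ and $-A_{ij}$ if $A_{ij}\preceq0$. With $A=[A_{ij}]\in\mathbb{R}^{dn\times dn}$ and $D=\mathrm{diag}(D_1,\dots,D_n)$, $D_i=\sum_{j:(i,j)\in\mathcal{E}}|A_{ij}|$, the matrix-valued Laplacian is $L=D-A$. Assumption 1: there is a sequence $\{t_k\}_{k\in\mathbb{N}}$ with $t_0=0$, $t_k\to\infty$, $t_{k+1}-t_k\ge\alpha>0$, and $\mathcal{G}(t)$ is constant on each $[t_k,t_{k+1})$. *)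

(* Defs.v *)
From HB Require Import structures.
From mathcomp Require Import all_boot all_order all_algebra.
From mathcomp Require Import all_classical all_reals all_analysis.
Set Implicit Arguments. Unset Strict Implicit. Unset Printing Implicit Defensive.
Import Order.TTheory GRing.Theory Num.Theory.
Local Open Scope ring_scope.

Definition psd (R : realType) (d : nat) (M : 'M[R]_d) : Prop :=
  M^T = M /\ forall x : 'cV[R]_d, 0 <= (x^T *m M *m x) 0 0.
Definition nsd (R : realType) (d : nat) (M : 'M[R]_d) : Prop := psd (- M).

(* |A_ij| : sgn i j = true means A_ij is positive semidefinite,
   false means negative semidefinite *)
Definition mabs (R : realType) (d : nat) (b : bool) (M : 'M[R]_d) : 'M[R]_d :=
  if b then M else - M.

(* A matrix-weighted network on n nodes with d x d weights, given by the
   weight function W : 'I_n -> 'I_n -> 'M_d (W i j = 0 when (i,j) is not an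
   edge) and the sign type sgn. *)
Definition weight_ok (R : realType) (n d : nat) (sgn : 'I_n -> 'I_n -> bool)
  (W : 'I_n -> 'I_n -> 'M[R]_d) : Prop :=
  (forall i j, W i j = W j i) /\ (forall i, W i i = 0) /\
  (forall i j, if sgn i j then psd (W i j) else nsd (W i j)).

(* dimension dn, written as \sum_(i < n) d via block matrices *)
Definition dn (n d : nat) : nat := (\sum_(i < n) d)%N.

Definition adjmx (R : realType) (n d : nat) (W : 'I_n -> 'I_n -> 'M[R]_d)
  : 'M[R]_(dn n d) := \mxblock_(i < n, j < n) W i j.

Definition degmx (R : realType) (n d : nat) (sgn : 'I_n -> 'I_n -> bool)
  (W : 'I_n -> 'I_n -> 'M[R]_d) : 'M[R]_(dn n d) :=
  \mxdiag_(i < n) (\sum_(j < n) mabs (sgn i j) (W i j)).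

Definition laplacian (R : realType) (n d : nat) (sgn : 'I_n -> 'I_n -> bool)
  (W : 'I_n -> 'I_n -> 'M[R]_d) : 'M[R]_(dn n d) :=
  degmx sgn W - adjmx W.

Definition mexp (R : realType) (N : nat) (M : 'M[R]_N) : 'M[R]_N :=
  limn (fun K : nat => \sum_(k < K) (k`!%:R)^-1 *: (M ^+ k)).

Fixpoint transition (R : realType) (N : nat) (L : nat -> 'M[R]_N)
  (dt : nat -> R) (k1 : nat) (len : nat) : 'M[R]_N :=
  match len with
  | 0 => 1%:M
  | len'.+1 => mexp (- (dt (k1 + len')%N *: L (k1 + len')%N))
               *m transition L dt k1 len'
  end.

Definition Phi (R : realType) (N : nat) (L : nat -> 'M[R]_N) (dt : nat -> R)
  (k1 k2 : nat) : 'M[R]_N := transition L dt k1 (k2 - k1).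

(* averaged Laplacian (1/(t_{k2}-t_{k1})) \int_{t_{k1}}^{t_{k2}} L(t) dt,
   for L(t) = L^k on [t_k, t_{k+1}) *)
Definition avg_laplacian (R : realType) (N : nat) (L : nat -> 'M[R]_N)
  (t : nat -> R) (k1 k2 : nat) : 'M[R]_N :=
  (t k2 - t k1)^-1 *: \sum_(k1 <= k < k2) ((t k.+1 - t k) *: L k).

Definition eigs_noninc (R : realType) (N : nat) (M : 'M[R]_N) (mu : seq R)
  : Prop :=
  size mu = N /\ sorted (fun x y => y <= x) mu /\
  char_poly M = \prod_(x <- mu) ('X - x%:P).

(* Main.v *)
Require Import Defs.
From HB Require Import structures.
From mathcomp Require Import all_boot all_order all_algebra.
From mathcomp Require Import all_classical all_reals all_analysis.
From mathcomp Require Import complex.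
From mathcomp Require Import ring lra.
Import Order.TTheory GRing.Theory Num.Theory.
Import numFieldNormedType.Exports.
Set Implicit Arguments. Unset Strict Implicit. Unset Printing Implicit Defensive.
Local Open Scope ring_scope.

Lemma real_sym_diag (R : rcfType) N (A : 'M[R]_N) : A^T = A ->
  exists P : 'M[R]_N, exists d : 'rV[R]_N,
    P \in unitmx /\ P *m A = diag_mx d *m P.
Proof.
move=> As.
pose f := real_complex R.
pose AC := map_mx f A.
have ACreal : AC \is a realmx.
  by apply/mxOverP => i j; rewrite mxE; apply/complex_realP; exists (A i j).
have ACsym : AC \is symmetricmx.
  apply/is_hermitianmxP; rewrite expr0 scale1r map_mx_id // /AC map_trmx.
  by rewrite As.
have ACherm := realsym_hermsym ACsym ACreal.
have /orthomx_spectralP ACE := hermitian_normalmx ACherm.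
set U := spectralmx AC in ACE; set dd := spectral_diag AC in ACE.
have ddreal : diag_mx dd \is a realmx.
  have := hermitian_spectral_diag_real ACherm.
  move=> /mxOverP H; apply/mxOverP => i j; rewrite mxE.
  by case: eqP => _; rewrite ?mulr1n ?mulr0n ?H ?real0.
have Uu : U \in unitmx by apply: spectral_unit.
have : similar_in unitmx AC (diag_mx dd).
  exists U => //; apply/similarP => //.
  by rewrite ACE !mulmxA mulmxV // mul1mx.
move=> /real_similar /(_ ACreal ddreal) [Q /andP [Qreal Qu] /(similarP Qu) QE].
pose re := fun z : R[i] => complex.Re z.
have fre : forall M : 'M[R[i]]_N, M \is a realmx -> map_mx f (map_mx re M) = M.
  move=> M /mxOverP MR; apply/matrixP => i j; rewrite !mxE.
  by apply: RRe_real.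
exists (map_mx re Q), (\row_j re (dd 0 j)).
have ddE : diag_mx dd = map_mx f (diag_mx (\row_j re (dd 0 j))).
  rewrite map_diag_mx; congr diag_mx; apply/matrixP => i j.
  rewrite !mxE ord1; apply/esym/RRe_real.
  by have := hermitian_spectral_diag_real ACherm => /mxOverP; apply.
split.
  by rewrite -(map_unitmx f) fre.
apply: (map_mx_inj (f := f)).
by rewrite !map_mxM fre // -ddE.
Qed.


Definition dmap (R : realType) N (d : 'rV[R]_N) (f : R -> R) : 'rV[R]_N :=
  \row_j f (d 0 j).
Definition fcv (R : realType) N (P : 'M[R]_N) (v : 'rV[R]_N) : 'M[R]_N :=
  invmx P *m diag_mx v *m P.
Definition nsq (R : realType) N (x : 'rV[R]_N) : R := (x *m x^T) 0 0.

Lemma nsqE (R : realType) N (x : 'rV[R]_N) : nsq x = \sum_j x 0 j ^+ 2.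
Proof. by rewrite /nsq !mxE; apply: eq_bigr => j _; rewrite mxE expr2. Qed.

Lemma nsq_ge0 (R : realType) N (x : 'rV[R]_N) : 0 <= nsq x.
Proof. by rewrite nsqE; apply: sumr_ge0 => j _; apply: sqr_ge0. Qed.

Lemma nsq_eq0 (R : realType) N (x : 'rV[R]_N) : nsq x = 0 -> x = 0.
Proof.
rewrite nsqE => /eqP; rewrite psumr_eq0; last by move=> j _; apply: sqr_ge0.
move=> /allP H; apply/rowP => j; rewrite mxE.
by apply/eqP; rewrite -sqrf_eq0; apply: H; rewrite mem_index_enum.
Qed.

Lemma comm_diag_f (R : realType) N (G : 'M[R]_N) d f :
  G *m diag_mx d = diag_mx d *m G ->
  G *m diag_mx (dmap d f) = diag_mx (dmap d f) *m G.
Proof.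
move=> /matrixP H; apply/matrixP => i j; have := H i j.
rewrite !mul_mx_diag !mul_diag_mx !mxE => Hij.
have [->|nz] := eqVneq (G i j) 0; first by rewrite mul0r mulr0.
have -> : d 0 j = d 0 i by apply: (mulfI nz); rewrite Hij mulrC.
by rewrite mulrC.
Qed.

Lemma GD (R : realType) N (A P : 'M[R]_N) d : A^T = A ->
  P *m A = diag_mx d *m P ->
  (P *m P^T) *m diag_mx d = diag_mx d *m (P *m P^T).
Proof.
move=> As PA.
have AP : A *m P^T = P^T *m diag_mx d.
  by rewrite -{1}As -trmx_mul PA trmx_mul tr_diag_mx.
by rewrite -mulmxA -AP mulmxA PA mulmxA.
Qed.

Lemma cancel_PPt (R : realType) N (P X Y : 'M[R]_N) : P \in unitmx ->
  P *m X *m P^T = P *m Y *m P^T -> X = Y.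
Proof.
move=> Pu H.
have Ptu : P^T \in unitmx by rewrite unitmx_tr.
have := congr1 (fun M => invmx P *m M *m invmx P^T) H.
by rewrite !mulmxA !mulVmx // !mul1mx -!mulmxA !mulmxV // !mulmx1.
Qed.

Lemma fcv_sym (R : realType) N (P : 'M[R]_N) v : P \in unitmx ->
  (P *m P^T) *m diag_mx v = diag_mx v *m (P *m P^T) ->
  (fcv P v)^T = fcv P v.
Proof.
move=> Pu Gc; apply: (cancel_PPt Pu).
rewrite /fcv !trmx_mul tr_diag_mx.
have E1 : (invmx P)^T *m P^T = 1%:M by rewrite -trmx_mul mulmxV // trmx1.
rewrite !mulmxA -(mulmxA _ (invmx P)^T) E1 mulmx1 mulmxV // mul1mx Gc.
by rewrite !mulmxA.
Qed.

Lemma diag_sq_add (R : realType) N (u w : 'rV[R]_N) :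
  (forall j, u 0 j ^+ 2 + w 0 j ^+ 2 = 1) ->
  diag_mx u *m diag_mx u + diag_mx w *m diag_mx w = 1%:M.
Proof.
move=> H; apply/matrixP => i j; rewrite !mulmx_diag !mxE.
have [->|ne] := eqVneq i j; last by rewrite !mulr0n addr0.
by rewrite !mulr1n -!expr2 H.
Qed.

Lemma nsq_cDP (R : realType) N (P : 'M[R]_N) (c u : 'rV[R]_N) :
  nsq (c *m diag_mx u *m P) =
  (c *m diag_mx u *m (P *m P^T) *m diag_mx u *m c^T) 0 0.
Proof. by rewrite /nsq !trmx_mul tr_diag_mx !mulmxA. Qed.

Lemma fcv_contract (R : realType) N (P : 'M[R]_N) d f (x : 'rV[R]_N) :
  P \in unitmx ->
  (P *m P^T) *m diag_mx d = diag_mx d *m (P *m P^T) ->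
  (forall j, f (d 0 j) ^+ 2 <= 1) ->
  nsq (x *m fcv P (dmap d f)) <= nsq x /\
  (nsq x <= nsq (x *m fcv P (dmap d f)) ->
     forall j, f (d 0 j) ^+ 2 < 1 -> (x *m invmx P) 0 j = 0).
Proof.
move=> Pu Gd f1.
set c := x *m invmx P.
have xE : x = c *m P by rewrite /c mulmxKV.
have xX : x *m fcv P (dmap d f) = c *m diag_mx (dmap d f) *m P.
  by rewrite xE /fcv !mulmxA mulmxK.
set h := dmap d (fun z => Num.sqrt (1 - f z ^+ 2)).
have GF := comm_diag_f f Gd.
have GH : P *m P^T *m diag_mx h = diag_mx h *m (P *m P^T) := comm_diag_f _ Gd.
have HF : diag_mx h *m diag_mx h + diag_mx (dmap d f) *m diag_mx (dmap d f)
          = 1%:M.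
  apply: diag_sq_add => j; rewrite !mxE sqr_sqrtr ?subrK // subr_ge0.
  exact: f1.
have key : nsq x = nsq (c *m diag_mx h *m P) + nsq (x *m fcv P (dmap d f)).
  rewrite xX !nsq_cDP.
  have -> : c *m diag_mx h *m (P *m P^T) *m diag_mx h *m c^T =
            c *m (diag_mx h *m diag_mx h) *m (P *m P^T) *m c^T.
    by rewrite -[c *m diag_mx h *m (P *m P^T) *m diag_mx h]mulmxA GH !mulmxA.
  have -> : c *m diag_mx (dmap d f) *m (P *m P^T) *m diag_mx (dmap d f) *m c^T =
            c *m (diag_mx (dmap d f) *m diag_mx (dmap d f)) *m (P *m P^T) *m c^T.
    by rewrite -[c *m diag_mx (dmap d f) *m (P *m P^T) *m diag_mx (dmap d f)]mulmxA GF !mulmxA.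
  have addE : forall A B : 'M[R]_1, A 0 0 + B 0 0 = (A + B) 0 0.
    by move=> A B; rewrite mxE.
  rewrite addE -mulmxDl -mulmxDl -mulmxDr HF mulmx1.
  by rewrite /nsq xE trmx_mul !mulmxA.
split.
  by rewrite key lerDr nsq_ge0.
move=> le j fj.
have h0 : nsq (c *m diag_mx h *m P) = 0.
  apply/eqP; rewrite eq_le nsq_ge0 andbT.
  by rewrite -(lerD2r (nsq (x *m fcv P (dmap d f)))) add0r -key.
have cH : c *m diag_mx h = 0.
  have := congr1 (mulmx^~ (invmx P)) (nsq_eq0 h0).
  by rewrite mulmxK // mul0mx.
have := congr1 (fun M : 'rV_N => M 0 j) cH.
rewrite mul_mx_diag !mxE => /eqP; rewrite mulf_eq0 => /orP [/eqP //|].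
by rewrite gt_eqF // sqrtr_gt0 subr_gt0.
Qed.


Lemma fcvM (R : realType) N (P : 'M[R]_N) u v : P \in unitmx ->
  fcv P u *m fcv P v = fcv P (\row_j (u 0 j * v 0 j)).
Proof.
move=> Pu; rewrite /fcv !mulmxA mulmxK // -mulmx_diag.
by rewrite -!mulmxA.
Qed.

Lemma fcv1 (R : realType) N (P : 'M[R]_N) : P \in unitmx ->
  fcv P (\row_j 1) = 1%:M.
Proof.
move=> Pu; rewrite /fcv; have -> : diag_mx (\row_j (1 : R)) = (1%:M : 'M[R]_N).
  by apply/matrixP => i j; rewrite !mxE.
by rewrite mulmx1 mulVmx.
Qed.

Definition Bl (R : realType) N (P : 'M[R]_N) (l : 'I_N) : 'M[R]_N :=
  invmx P *m delta_mx l l *m P.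

Lemma fcv_sum (R : realType) N (P : 'M[R]_N) v :
  fcv P v = \sum_l v 0 l *: Bl P l.
Proof.
rewrite /fcv diag_mx_sum_delta mulmx_sumr mulmx_suml.
by apply: eq_bigr => l _; rewrite /Bl -scalemxAr -scalemxAl.
Qed.

Lemma fcv_pow (R : realType) N (P : 'M[R]_N) d g k : P \in unitmx ->
  (fcv P (dmap d g)) ^+ k = fcv P (dmap d (fun z => g z ^+ k)).
Proof.
move=> Pu; elim: k => [|k IH].
  rewrite expr0; transitivity (fcv P (\row_j (1 : R))); first by rewrite fcv1.
  by congr fcv; apply/rowP => j; rewrite !mxE expr0.
rewrite exprS IH -mulmxE fcvM //; congr fcv; apply/rowP => j.
by rewrite !mxE exprS.
Qed.

Lemma mexp_fcv (R : realType) N (P : 'M[R]_N) d g : P \in unitmx ->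
  mexp (fcv P (dmap d g)) = fcv P (dmap d (fun z => expR (g z))).
Proof.
move=> Pu; rewrite /mexp.
apply: cvg_lim; first exact: norm_hausdorff.
have -> : (fun K : nat => \sum_(k < K) (k`!%:R)^-1 *: fcv P (dmap d g) ^+ k) =
   (fun K => \sum_l (series (exp_coeff (g (d 0 l))) K) *: Bl P l).
  apply: funext => K.
  under eq_bigr => k _ do rewrite fcv_pow // fcv_sum scaler_sumr.
  rewrite exchange_big /=; apply: eq_bigr => l _.
  rewrite seriesEord /= scaler_suml; apply: eq_bigr => k _.
  by rewrite scalerA !mxE /exp_coeff /= mulrC.
rewrite fcv_sum.
apply: cvg_big => //; first exact: add_continuous.
move=> l _; apply: cvgZr_tmp; rewrite mxE.
exact: is_cvg_series_exp_coeff.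
Qed.


Lemma unit_row_neq0 (R : realType) N (P : 'M[R]_N) j : P \in unitmx ->
  row j P != 0.
Proof.
move=> Pu; apply/eqP => H.
have : row j P *m invmx P = 0 by rewrite H mul0mx.
rewrite rowE mulmxK // => /rowP /(_ j); rewrite !mxE.
by move/eqP; rewrite !eqxx /= oner_eq0.
Qed.

Lemma expm_props (R : realType) N (A : 'M[R]_N) (tau : R) : A^T = A ->
  (forall x : 'rV[R]_N, 0 <= (x *m A *m x^T) 0 0) -> 0 < tau ->
  let E := mexp (- (tau *: A)) in
  [/\ E^T = E, (forall x : 'rV[R]_N, nsq (x *m E) <= nsq x),
      (forall x : 'rV[R]_N, nsq x <= nsq (x *m E) -> x *m A = 0) &
      (forall x : 'rV[R]_N, x *m A = 0 -> x *m E = x)].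
Proof.
move=> As Apsd tau0 E.
have [P [d [Pu PA]]] := real_sym_diag As.
have AE : A = fcv P d by rewrite /fcv -mulmxA -PA mulKmx.
have d0 : forall j, 0 <= d 0 j.
  move=> j; set p := row j P.
  have pA : p *m A = d 0 j *: p.
    by rewrite /p -row_mul PA row_mul row_diag_mx -scalemxAl -rowE.
  have := Apsd p; rewrite pA -scalemxAl mxE.
  have : 0 < nsq p.
    rewrite lt_def nsq_ge0 andbT; apply/negP => /eqP /nsq_eq0 /eqP.
    by apply/negP; apply: unit_row_neq0.
  by rewrite /nsq => pp H; rewrite -(pmulr_lge0 _ pp).
set f := fun z : R => expR (- (tau * z)).
have EE : E = fcv P (dmap d f).
  rewrite /E /f -(mexp_fcv d (fun z => - (tau * z)) Pu); congr mexp.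
  rewrite AE /fcv.
  have -> : diag_mx (dmap d (fun z => - (tau * z))) = - (tau *: diag_mx d).
    by apply/matrixP => i k; rewrite !mxE mulrnAr mulNrn.
  by rewrite mulmxN mulNmx -scalemxAr -scalemxAl.
have Gd := GD As PA.
have f1 : forall j, f (d 0 j) ^+ 2 <= 1.
  move=> j; rewrite expr_le1 ?expR_ge0 // expR_le1 oppr_le0.
  by rewrite mulr_ge0 // ltW.
have cA : forall x : 'rV[R]_N, x *m A = (x *m invmx P) *m diag_mx d *m P.
  by move=> x; rewrite AE /fcv !mulmxA.
split.
- by rewrite EE; apply: fcv_sym => //; apply: comm_diag_f.
- by move=> x; rewrite EE; case: (fcv_contract x Pu Gd f1).
- move=> x le; rewrite EE in le.
  have [_ H] := fcv_contract x Pu Gd f1.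
  have {}H := H le.
  rewrite cA; suff -> : x *m invmx P *m diag_mx d = 0 by rewrite mul0mx.
  apply/rowP => j; rewrite mul_mx_diag mxE [RHS]mxE.
  have [->|dj] := eqVneq (d 0 j) 0; first by rewrite mulr0.
  rewrite H ?mul0r //.
  have dpos : 0 < d 0 j by rewrite lt_def dj d0.
  rewrite expr_lt1 ?expR_ge0 // /f expR_lt1 oppr_lt0 mulr_gt0 //.
- move=> x xA; rewrite EE /fcv !mulmxA.
  have cD : x *m invmx P *m diag_mx d = 0.
    have := congr1 (mulmx^~ (invmx P)) xA.
    by rewrite cA mul0mx mulmxK.
  rewrite -[RHS](mulmxKV Pu); congr (_ *m _).
  apply/rowP => j; rewrite mul_mx_diag mxE [in X in _ * X]mxE.
  have := congr1 (fun M : 'rV_N => M 0 j) cD; rewrite mul_mx_diag /= mxE [RHS]mxE.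
  move=> /eqP; rewrite mulf_eq0 => /orP [/eqP ->|/eqP ->]; first by rewrite mul0r.
  by rewrite /f mulr0 oppr0 expR0 mulr1.
Qed.


Definition bil (R : realType) d (u : 'rV[R]_d) (M : 'M[R]_d) (v : 'rV[R]_d) : R :=
  (u *m M *m v^T) 0 0.

Lemma m00B (R : realType) (A B : 'M[R]_1) : (A - B) 0 0 = A 0 0 - B 0 0.
Proof. by rewrite !mxE. Qed.
Lemma m00D (R : realType) (A B : 'M[R]_1) : (A + B) 0 0 = A 0 0 + B 0 0.
Proof. by rewrite !mxE. Qed.
Lemma m00N (R : realType) (A : 'M[R]_1) : (- A) 0 0 = - A 0 0.
Proof. by rewrite !mxE. Qed.

Lemma bilBl (R : realType) d (u w v : 'rV[R]_d) M :
  bil (u - w) M v = bil u M v - bil w M v.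
Proof. by rewrite /bil !mulmxBl m00B. Qed.
Lemma bilDl (R : realType) d (u w v : 'rV[R]_d) M :
  bil (u + w) M v = bil u M v + bil w M v.
Proof. by rewrite /bil !mulmxDl m00D. Qed.
Lemma bilBr (R : realType) d (u w v : 'rV[R]_d) M :
  bil v M (u - w) = bil v M u - bil v M w.
Proof. by rewrite /bil linearB /= mulmxBr m00B. Qed.
Lemma bilDr (R : realType) d (u w v : 'rV[R]_d) M :
  bil v M (u + w) = bil v M u + bil v M w.
Proof. by rewrite /bil linearD /= mulmxDr m00D. Qed.
Lemma bilNM (R : realType) d (u v : 'rV[R]_d) M :
  bil u (- M) v = - bil u M v.
Proof. by rewrite /bil mulmxN mulNmx m00N. Qed.
Lemma bil_sym (R : realType) d (u v : 'rV[R]_d) M : M^T = M ->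
  bil u M v = bil v M u.
Proof.
move=> Ms; rewrite /bil.
have -> : (u *m M *m v^T) 0 0 = ((u *m M *m v^T)^T) 0 0 by rewrite [RHS]mxE.
by rewrite !trmx_mul Ms trmxK mulmxA.
Qed.

Lemma psd_row (R : realType) d (M : 'M[R]_d) : psd M -> forall u, 0 <= bil u M u.
Proof. by move=> [_ H] u; have := H u^T; rewrite trmxK. Qed.

Lemma psd_sym (R : realType) d (M : 'M[R]_d) : psd M -> M^T = M.
Proof. by case. Qed.
Lemma nsd_sym (R : realType) d (M : 'M[R]_d) : nsd M -> M^T = M.
Proof. by case => H _; rewrite -[M]opprK linearN /= H. Qed.

Lemma pair_ge0 (R : realType) d (W M M' : 'M[R]_d) (u v : 'rV[R]_d) :
  W^T = W -> psd M -> psd M' ->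
  [\/ M = W /\ M' = W, M = - W /\ M' = - W | psd W /\ nsd W] ->
  0 <= bil u M u + bil v M' v - bil u W v - bil v W u.
Proof.
move=> Ws pM pM' [[eM eM']|[eM eM']|[pW nW]]; subst.
- have := psd_row pM (u - v).
  rewrite bilBl !bilBr (bil_sym v u Ws).
  by lra.
- have := psd_row pM (u + v).
  rewrite bilDl !bilDr !bilNM (bil_sym v u Ws).
  by lra.
- have z : forall w, bil w W w = 0.
    move=> w; apply/eqP; rewrite eq_le psd_row // andbT.
    by have := psd_row nW w; rewrite bilNM oppr_ge0.
  have uv : bil u W v = 0.
    have := z (u + v); rewrite bilDl !bilDr (bil_sym v u Ws) !z add0r addr0.
    by lra.
  rewrite uv (bil_sym v u Ws) uv !subr0.
  by apply: addr_ge0; apply: psd_row.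
Qed.

Lemma w_sym (R : realType) n d sgn (W : 'I_n -> 'I_n -> 'M[R]_d) :
  weight_ok sgn W -> forall i j, (W i j)^T = W i j.
Proof.
move=> [_ [_ H]] i j; have := H i j; case: (sgn i j).
  exact: psd_sym.
exact: nsd_sym.
Qed.

Lemma mabs_psd (R : realType) n d sgn (W : 'I_n -> 'I_n -> 'M[R]_d) :
  weight_ok sgn W -> forall i j, psd (mabs (sgn i j) (W i j)).
Proof. by move=> [_ [_ H]] i j; have := H i j; rewrite /mabs; case: (sgn i j). Qed.

Lemma lap_sym (R : realType) n d sgn (W : 'I_n -> 'I_n -> 'M[R]_d) :
  weight_ok sgn W -> (laplacian sgn W)^T = laplacian sgn W.
Proof.
move=> wok; rewrite /laplacian /degmx /adjmx linearB /= tr_mxdiag tr_mxblock.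
congr (_ - _).
  apply/eq_mxdiagP => i; rewrite linear_sum /=; apply: eq_bigr => j _.
  by apply: psd_sym; apply: mabs_psd.
apply/eq_mxblockP => i j.
by rewrite (w_sym wok); case: wok => -> _.
Qed.

Lemma lap_psd (R : realType) n d sgn (W : 'I_n -> 'I_n -> 'M[R]_d) :
  weight_ok sgn W ->
  forall x : 'rV[R]_(dn n d), 0 <= (x *m laplacian sgn W *m x^T) 0 0.
Proof.
move=> wok x.
set xs := fun i => submxrow (q_ := fun _ : 'I_n => d) x i.
have xE : x = \mxrow_i xs i by rewrite submxrowK.
have Wsym : forall i j, W j i = W i j by case: wok.
pose M i j := mabs (sgn i j) (W i j).
pose a i j := bil (xs i) (M i j) (xs i) - bil (xs i) (W i j) (xs j).
have -> : (x *m laplacian sgn W *m x^T) 0 0 = \sum_i \sum_j a i j.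
  rewrite /laplacian mulmxBr mulmxBl m00B /degmx /adjmx.
  rewrite [in X in X - _]xE mul_mxrow_mxdiag xE tr_mxrow mul_mxrow_mxcol.
  rewrite mul_mxrow_mxblock mul_mxrow_mxcol !summxE.
  have -> : \sum_k ((\sum_i xs i *m W i k) *m (xs k)^T) 0 0 =
            \sum_i \sum_j bil (xs i) (W i j) (xs j).
    rewrite exchange_big /=; apply: eq_bigr => j _.
    by rewrite mulmx_suml summxE.
  rewrite -sumrB; apply: eq_bigr => i _.
  rewrite mulmx_sumr mulmx_suml summxE -sumrB; apply: eq_bigr => j _.
  by [].
have pair : forall i j, 0 <= a i j + a j i.
  move=> i j; rewrite /a /M (Wsym i j).
  have -> : bil (xs i) (mabs (sgn i j) (W i j)) (xs i) - bil (xs i) (W i j) (xs j) +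
    (bil (xs j) (mabs (sgn j i) (W i j)) (xs j) - bil (xs j) (W i j) (xs i)) =
    bil (xs i) (mabs (sgn i j) (W i j)) (xs i) + bil (xs j) (mabs (sgn j i) (W i j)) (xs j)
    - bil (xs i) (W i j) (xs j) - bil (xs j) (W i j) (xs i) by lra.
  have hij := mabs_psd wok i j; have hji := mabs_psd wok j i.
  rewrite (Wsym i j) in hji.
  apply: pair_ge0 => //; first exact: (w_sym wok).
  case: wok => _ [_ H]; have := H i j; have := H j i; rewrite (Wsym i j) /mabs.
  case: (sgn i j); case: (sgn j i) => h1 h2.
  - by apply: Or31.
  - by apply: Or33.
  - by apply: Or33.
  - by apply: Or32.
have : 0 <= \sum_i \sum_j (a i j + a j i).
  by apply: sumr_ge0 => i _; apply: sumr_ge0 => j _.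
under eq_bigr => i _ do rewrite big_split /=.
rewrite big_split /= [X in _ + X]exchange_big /=.
by lra.
Qed.


Lemma char_poly_conj (F : fieldType) n (P A : 'M[F]_n) : P \in unitmx ->
  char_poly (invmx P *m A *m P) = char_poly A.
Proof.
move=> Pu; rewrite /char_poly /char_poly_mx.
set Q := map_mx polyC (invmx P); set P' := map_mx polyC P.
have QP : Q *m P' = 1%:M by rewrite -map_mxM mulVmx // map_mx1.
have -> : map_mx polyC (invmx P *m A *m P) = Q *m map_mx polyC A *m P'.
  by rewrite !map_mxM.
have -> : 'X%:M - Q *m map_mx polyC A *m P' = Q *m ('X%:M - map_mx polyC A) *m P'.
  by rewrite mulmxBr mulmxBl scalar_mxC -[_%:M *m Q *m P']mulmxA QP mulmx1.
rewrite !det_mulmx mulrC mulrA -det_mulmx.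
have PQ : P' *m Q = 1%:M by rewrite -map_mxM mulmxV // map_mx1.
by rewrite PQ det1 mul1r.
Qed.

Lemma char_poly_block1 (F : fieldType) m r (C : 'M[F]_r) :
  char_poly (block_mx (1%:M : 'M[F]_m) 0 0 C) = ('X - 1) ^+ m * char_poly C.
Proof.
rewrite /char_poly /char_poly_mx map_block_mx map_mx1 !map_mx0.
rewrite [X in X - _](scalar_mx_block m r) opp_block_mx add_block_mx.
rewrite !oppr0 !addr0 det_ublock.
by rewrite -(@raddfB _ _ (@scalar_mx {poly F} m)) det_scalar.
Qed.


Lemma block_contra (R : realType) N m r (S K : 'M[R]_N) :
  (m + r)%N = N -> S^T = S -> \rank K = m ->
  (forall x : 'rV[R]_N, (x <= K)%MS -> x *m S = x) ->
  (forall x : 'rV[R]_N, x *m S = x -> (x <= K)%MS) ->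
  ('X - 1) ^+ m.+1 %| char_poly S -> False.
Proof.
move=> eN Ss rK Kfix fixK dv; subst N.
pose B1 : 'M[R]_(m, m + r) := castmx (rK, erefl) (row_base K).
have B1K : (B1 :=: K)%MS by apply: eqmx_trans (eqmx_cast _ _) (eq_row_base K).
have B1f : row_free B1 by rewrite row_free_castmx row_base_free.
have rB1 : \rank B1 = m by apply/eqP; exact: B1f.
pose kB := kermx B1^T.
have rk2 : \rank kB = r by rewrite mxrank_ker mxrank_tr rB1 addKn.
pose B2 : 'M[R]_(r, m + r) := castmx (rk2, erefl) (row_base kB).
have B2k : (B2 :=: kB)%MS by apply: eqmx_trans (eqmx_cast _ _) (eq_row_base kB).
have B2f : row_free B2 by rewrite row_free_castmx row_base_free.
have ker2 : forall p (x : 'M[R]_(p, m + r)), (x <= B2)%MS -> x *m B1^T = 0.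
  by move=> p x; rewrite B2k sub_kermx => /eqP.
have orth : forall x : 'rV_(m + r), (x <= B1)%MS -> (x <= B2)%MS -> x = 0.
  move=> x /submxP [z ->] x2; apply: nsq_eq0.
  rewrite /nsq trmx_mul mulmxA.
  by rewrite (ker2 _ _ x2) mul0mx mxE.
pose P := col_mx B1 B2.
have Pu : P \in unitmx.
  rewrite -row_full_unit /row_full /P -addsmxE mxrank_disjoint_sum.
    by rewrite rB1 (eqP B2f).
  apply/eqP; rewrite -submx0; apply/rV_subP => x; rewrite sub_capmx.
  by move=> /andP [x1 x2]; rewrite (orth _ x1 x2) sub0mx.
have B1S : B1 *m S = B1.
  apply/row_matrixP => i; rewrite row_mul; apply: Kfix.
  by rewrite -B1K row_sub.
have B2S : (B2 *m S <= B2)%MS.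
  rewrite B2k sub_kermx; apply/eqP.
  by rewrite -mulmxA -{1}Ss -trmx_mul B1S; apply: ker2; exact: submx_refl.
pose C := B2 *m S *m pinvmx B2.
have CB2 : C *m B2 = B2 *m S by rewrite /C mulmxKpV.
have PS : P *m S = block_mx (1%:M) 0 0 C *m P.
  rewrite /P mul_col_mx mul_block_col !mul1mx !mul0mx addr0 add0r.
  by rewrite B1S CB2.
have SE : S = invmx P *m block_mx (1%:M) 0 0 C *m P.
  by rewrite -mulmxA -PS mulKmx.
have cpS : char_poly S = ('X - 1) ^+ m * char_poly C.
  by rewrite {1}SE char_poly_conj // char_poly_block1.
move: dv; rewrite cpS exprSr dvdp_mul2l; last first.
  by rewrite expf_neq0 // -polyC1 polyXsubC_eq0.
rewrite -polyC1 dvdp_XsubCl -eigenvalue_root_char => /eigenvalueP [v vC v0].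
set w := v *m B2.
have wS : w *m S = w by rewrite /w -mulmxA -CB2 mulmxA vC scale1r.
have w0 : w = 0.
  apply: orth; last by apply: submxMl.
  by rewrite B1K; apply: fixK.
by move: v0; rewrite -(mulmx_free_eq0 _ B2f) -/w w0 eqxx.
Qed.


Lemma bilZl (R : realType) d (u v : 'rV[R]_d) M (s : R) :
  bil (s *: u) M v = s * bil u M v.
Proof. by rewrite /bil -!scalemxAl mxE. Qed.
Lemma bilZr (R : realType) d (u v : 'rV[R]_d) M (s : R) :
  bil u M (s *: v) = s * bil u M v.
Proof. by rewrite /bil linearZ /= -scalemxAr mxE. Qed.

Lemma psd_ker (R : realType) N (A : 'M[R]_N) (x : 'rV[R]_N) : A^T = A ->
  (forall y, 0 <= bil y A y) -> bil x A x = 0 -> x *m A = 0.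
Proof.
move=> As Apsd hx; set y := x *m A.
have xy : bil x A y = nsq y by rewrite /bil /nsq.
have yx : bil y A x = nsq y by rewrite (bil_sym _ _ As) xy.
set n := nsq y; set q := bil y A y.
have n0 : 0 <= n := nsq_ge0 y.
have q0 : 0 <= q := Apsd y.
pose s := n / (q + 1).
have hs : n = s * (q + 1) by rewrite /s mulfVK // gt_eqF // ltr_wpDl.
have := Apsd (x - s *: y).
rewrite bilBl !bilBr !bilZl !bilZr hx xy yx -/n -/q => H.
have : n <= 0 by nra.
move=> nle; apply: nsq_eq0; apply/eqP; rewrite eq_le nle; exact: n0.
Qed.


Lemma bilZM (R : realType) d (u v : 'rV[R]_d) M (s : R) :
  bil u (s *: M) v = s * bil u M v.
Proof. by rewrite /bil -scalemxAr -scalemxAl mxE. Qed.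

Lemma bil_sumM (R : realType) d (u v : 'rV[R]_d) (r : seq nat) (F : nat -> 'M[R]_d) :
  bil u (\sum_(k <- r) F k) v = \sum_(k <- r) bil u (F k) v.
Proof.
elim: r => [|a r IH]; first by rewrite !big_nil /bil mulmx0 mul0mx mxE.
by rewrite !big_cons /bil mulmxDr mulmxDl m00D -IH.
Qed.

Lemma t_incr (R : realType) (t : nat -> R) k1 k2 :
  (forall k, t k < t k.+1) -> (k1 < k2)%N -> t k1 < t k2.
Proof.
move=> ti; elim: k2 => [//|k2 IH]; rewrite ltnS leq_eqVlt => /orP [/eqP ->//|h].
exact: lt_trans (IH h) (ti k2).
Qed.

Lemma ker_avg (R : realType) N (L : nat -> 'M[R]_N) (t : nat -> R) k1 k2
  (x : 'rV[R]_N) :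
  (forall k, (L k)^T = L k) -> (forall k y, 0 <= bil y (L k) y) ->
  (forall k, t k < t k.+1) -> (k1 < k2)%N ->
  (x *m avg_laplacian L t k1 k2 = 0) <-> (forall k, (k1 <= k < k2)%N -> x *m L k = 0).
Proof.
move=> Ls Lp ti k12; rewrite /avg_laplacian; split; last first.
  move=> H; rewrite -scalemxAr mulmx_sumr big_nat_cond big1 ?scaler0 //.
  by move=> k /andP [hk _]; rewrite -scalemxAr H ?scaler0.
move=> H0 k hk.
have c0 : 0 < (t k2 - t k1)^-1 by rewrite invr_gt0 subr_gt0 t_incr.
have hb : bil x ((t k2 - t k1)^-1 *: \sum_(k1 <= k < k2) (t k.+1 - t k) *: L k) x = 0.
  by rewrite /bil H0 mul0mx mxE.
rewrite bilZM bil_sumM in hb.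
have hs : \sum_(i <- index_iota k1 k2) bil x ((t i.+1 - t i) *: L i) x = 0.
  by apply/eqP; move: hb => /eqP; rewrite mulf_eq0 gt_eqF.
have tk : 0 < t k.+1 - t k by rewrite subr_gt0.
have ge0 : forall i, 0 <= bil x ((t i.+1 - t i) *: L i) x.
  by move=> i; rewrite bilZM mulr_ge0 // subr_ge0 ltW.
move: hs; rewrite (bigD1_seq k) ?mem_index_iota ?iota_uniq //= => hs.
have hk0 : bil x ((t k.+1 - t k) *: L k) x = 0.
  apply/eqP; rewrite eq_le ge0 andbT -hs lerDl.
  by apply: sumr_ge0 => i _.
apply: psd_ker => //; move: hk0; rewrite bilZM => /eqP; rewrite mulf_eq0.
by rewrite gt_eqF // => /eqP.
Qed.

Definition Eprops (R : realType) N (L : nat -> 'M[R]_N) (dt : nat -> R) :=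
  forall k, let E := mexp (- (dt k *: L k)) in
  [/\ E^T = E, (forall x : 'rV[R]_N, nsq (x *m E) <= nsq x),
      (forall x : 'rV[R]_N, nsq x <= nsq (x *m E) -> x *m L k = 0) &
      (forall x : 'rV[R]_N, x *m L k = 0 -> x *m E = x)].

Lemma trans_fix (R : realType) N (L : nat -> 'M[R]_N) (dt : nat -> R) k1 len
  (x : 'rV[R]_N) : Eprops L dt ->
  (forall k, (k1 <= k < k1 + len)%N -> x *m L k = 0) ->
  x *m transition L dt k1 len = x /\ x *m (transition L dt k1 len)^T = x.
Proof.
move=> hE; elim: len => [|len IH] H /=; first by rewrite trmx1 mulmx1.
have [IH1 IH2] : x *m transition L dt k1 len = x /\
                 x *m (transition L dt k1 len)^T = x.
  by apply: IH => k /andP [h1 h2]; apply: H; rewrite h1 /= (leq_trans h2) // addnS.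
have [Es _ _ Efix] := hE (k1 + len)%N.
have xL : x *m L (k1 + len)%N = 0 by apply: H; rewrite leq_addr addnS ltnSn.
split; first by rewrite mulmxA Efix.
by rewrite trmx_mul mulmxA IH2 Es Efix.
Qed.

Lemma trans_contract (R : realType) N (L : nat -> 'M[R]_N) (dt : nat -> R) k1 len
  (x : 'rV[R]_N) : Eprops L dt ->
  nsq (x *m (transition L dt k1 len)^T) <= nsq x /\
  (nsq x <= nsq (x *m (transition L dt k1 len)^T) ->
    forall k, (k1 <= k < k1 + len)%N -> x *m L k = 0).
Proof.
move=> hE; elim: len => [|len [IH1 IH2]] /=.
  by rewrite trmx1 mulmx1; split=> // _ k; rewrite addn0 => /andP [h1 h2];
     move: (leq_ltn_trans h1 h2); rewrite ltnn.
have [Es Ec Ek _] := hE (k1 + len)%N.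
set E := mexp _ in Es Ec Ek *.
set T := transition L dt k1 len in IH1 IH2 *.
have eq : x *m (E *m T)^T = (x *m T^T) *m E by rewrite trmx_mul Es mulmxA.
rewrite eq; split; first exact: le_trans (Ec _) IH1.
move=> le.
have le2 : nsq x <= nsq (x *m T^T) := le_trans le (Ec _).
have H := IH2 le2.
have [_ xT] := trans_fix hE H.
rewrite -/T in xT.
rewrite xT in le.
move=> k /andP [h1 h2]; rewrite addnS ltnS leq_eqVlt in h2.
case/orP: h2 => [/eqP ->|h2]; first exact: Ek.
by apply: H; rewrite h1.
Qed.


Lemma prod_nseq1 (R : realType) k :
  \prod_(x <- nseq k (1 : R)) ('X - x%:P) = ('X - 1) ^+ k.
Proof.
elim: k => [|k IH]; first by rewrite big_nil expr0.
by rewrite /= big_cons IH exprS polyC1.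
Qed.

Theorem lemma10 (R : realType) (n d : nat) (sgn : 'I_n -> 'I_n -> bool)
  (W : nat -> 'I_n -> 'I_n -> 'M[R]_d) (t : nat -> R) (alpha : R)
  (k1 k2 m : nat) (mu : seq R) :
  (1 < n)%N ->
  (forall k, weight_ok sgn (W k)) ->
  t 0%N = 0 -> 0 < alpha -> (forall k, alpha <= t k.+1 - t k) ->
  (forall M : R, exists K : nat, forall k, (K <= k)%N -> M <= t k) ->
  (k1 < k2)%N ->
  m = \rank (kermx (avg_laplacian (fun k => laplacian sgn (W k)) t k1 k2)) ->
  (m < dn n d)%N ->
  eigs_noninc ((Phi (fun k => laplacian sgn (W k)) (fun k => t k.+1 - t k) k1 k2)^T
               *m Phi (fun k => laplacian sgn (W k)) (fun k => t k.+1 - t k) k1 k2) mu ->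
  mu`_m < 1.
Proof.
move=> _ wok _ alpha0 hal _ k12 hm mN [smu [srt cp]].
set N := dn n d in mN smu cp *.
set Ls := fun k => laplacian sgn (W k) in hm cp *.
set dt := fun k => t k.+1 - t k in cp *.
have dt0 : forall k, 0 < dt k by move=> k; apply: lt_le_trans alpha0 (hal k).
have ti : forall k, t k < t k.+1 by move=> k; rewrite -subr_gt0; apply: dt0.
have Lsym : forall k, (Ls k)^T = Ls k by move=> k; apply: lap_sym.
have Lpsd : forall k (y : 'rV[R]_N), 0 <= bil y (Ls k) y.
  by move=> k y; apply: lap_psd.
have hE : Eprops Ls dt.
  by move=> k; apply: expm_props => //; apply: Lpsd.
set Ph := Phi Ls dt k1 k2 in cp *.
have PhE : Ph = transition Ls dt k1 (k2 - k1) by [].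
have k2E : (k1 + (k2 - k1))%N = k2 by rewrite subnKC // ltnW.
set S := Ph^T *m Ph in cp *.
have Ss : S^T = S by rewrite /S trmx_mul trmxK.
have qS : forall x : 'rV[R]_N, (x *m S *m x^T) 0 0 = nsq (x *m Ph^T).
  by move=> x; rewrite /nsq /S trmx_mul trmxK !mulmxA.
set K := kermx (avg_laplacian Ls t k1 k2) in hm.
have inK : forall x : 'rV[R]_N,
    (x <= K)%MS <-> (forall k, (k1 <= k < k2)%N -> x *m Ls k = 0).
  move=> x; rewrite sub_kermx -(ker_avg x Lsym Lpsd ti k12).
  by split => [/eqP|->].
have Kfix : forall x : 'rV[R]_N, (x <= K)%MS -> x *m S = x.
  move=> x /inK H.
  have H' : forall k, (k1 <= k < k1 + (k2 - k1))%N -> x *m Ls k = 0.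
    by rewrite k2E.
  have [h1 h2] := trans_fix hE H'.
  by rewrite /S mulmxA PhE h2 h1.
have qK : forall x : 'rV[R]_N, nsq x <= (x *m S *m x^T) 0 0 -> (x <= K)%MS.
  move=> x le; apply/inK; rewrite -k2E; move: le; rewrite qS PhE.
  by have [_ ] := trans_contract k1 (k2 - k1) x hE.
have fixK : forall x : 'rV[R]_N, x *m S = x -> (x <= K)%MS.
  by move=> x xS; apply: qK; rewrite xS.
have eig1 : forall (a : R) (v : 'rV[R]_N), v *m S = a *: v -> v != 0 -> 1 <= a -> a = 1.
  move=> a v vS v0 a1.
  have vK : (v <= K)%MS.
    apply: qK; rewrite vS -scalemxAl mxE -/(nsq v).
    by rewrite ler_pMl ?nsq_ge0 // lt_def nsq_ge0 andbT;
       apply/negP => /eqP /nsq_eq0 /eqP; apply/negP.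
  move: vS; rewrite Kfix // => /eqP; rewrite -subr_eq0 -{1}(scale1r v) -scalerBl.
  rewrite scaler_eq0 (negbTE v0) orbF subr_eq0 => /eqP <-.
  by [].
rewrite ltNge; apply/negP => hmu.
have mu1 : forall i, (i <= m)%N -> mu`_i = 1.
  move=> i im.
  have iN : (i < size mu)%N by rewrite smu (leq_ltn_trans im mN).
  have ge : mu`_m <= mu`_i.
    have tr : transitive (fun x y : R => y <= x).
      by move=> x y z /= h1 h2; apply: le_trans h2 h1.
    have rf : reflexive (fun x y : R => y <= x) by move=> x /=.
    have := sorted_leq_nth tr rf 0 srt => /(_ i m) H; apply: H => //.
    by rewrite inE smu.
  have : root (char_poly S) mu`_i by rewrite cp root_prod_XsubC mem_nth.
  rewrite -eigenvalue_root_char => /eigenvalueP [v vS v0].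
  by apply: eig1 vS v0 _; apply: le_trans hmu ge.
have tk : take m.+1 mu = nseq m.+1 1.
  apply: (eq_from_nth (x0 := 0)); first by rewrite size_takel ?size_nseq // smu.
  move=> i; rewrite size_takel ?smu // => im.
  by rewrite nth_take // nth_nseq im mu1.
apply: (block_contra (r := (N - m)%N) _ Ss (esym hm) Kfix fixK).
  by rewrite subnKC // ltnW.
by rewrite cp -(cat_take_drop m.+1 mu) big_cat /= tk prod_nseq1 dvdp_mulIl.
Qed.
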